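(* Let $K,L,N$ be positive integers, $M=K/\gcd(K,L)$, and write $L=\prod_p p^{\lambda_p}$, $N=\prod_p p^{\nu_p}$. Let $f_1,\dots,f_n$ and $d_1,\dots,d_n$ be integers such that both $\prod_i f_i$ and $\prod_i (f_i-d_iK)$ are divisible by $N$. Suppose that for every prime $p$ dividing $M$ with $\lambda_p<\nu_p$ there exist integers $0\le\alpha_{i,p}\le\lambda_p$ ($i=1,\dots,n$) such that $p^{\alpha_{i,p}}\mid f_i$ for each $i$ and $\sum_i\alpha_{i,p}\ge\nu_p$. Then $$\frac{\prod_i f_i}{N}\equiv\frac{\prod_i(f_i-d_iK)}{N}\pmod M.$$ *)

(* Defs.v *)
From mathcomp Require Import all_boot all_order all_algebra.

(* Main.v *)
Require Import Defs.
From mathcomp Require Import all_boot all_order all_algebra.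
From mathcomp Require Import ring zify.
Import GRing.Theory Num.Theory.
Local Open Scope ring_scope.

Lemma prod_congr_dvd (I : Type) (m : int) (r : seq I) (F G : I -> int) :
  (forall i, (m %| F i - G i)%Z) ->
  (m %| \prod_(i <- r) F i - \prod_(i <- r) G i)%Z.
Proof.
move=> H; elim: r => [|a r IH]; first by rewrite !big_nil subrr dvdz0.
rewrite !big_cons.
have -> : F a * \prod_(j <- r) F j - G a * \prod_(j <- r) G j =
  F a * (\prod_(j <- r) F j - \prod_(j <- r) G j) + (F a - G a) * \prod_(j <- r) G j by ring.
by rewrite rpredD //; [apply: dvdz_mull | apply: dvdz_mulr].
Qed.

Lemma natdvdz {a b : nat} : (a %| b)%N -> (a%:Z %| b%:Z)%Z.
Proof. by rewrite dvdzE. Qed.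

Theorem fact1 (K L N : nat) (n : nat) (f d : 'I_n -> int) :
  (0 < K)%N -> (0 < L)%N -> (0 < N)%N ->
  (N%:Z %| \prod_(i < n) f i)%Z ->
  (N%:Z %| \prod_(i < n) (f i - d i * K%:Z))%Z ->
  (forall p : nat, prime p -> (p %| K %/ gcdn K L)%N ->
     (logn p L < logn p N)%N ->
     exists alpha : 'I_n -> nat,
       [/\ forall i, (alpha i <= logn p L)%N,
           forall i, ((p ^ alpha i)%N%:Z %| f i)%Z
         & (logn p N <= \sum_(i < n) alpha i)%N]) ->
  (divz (\prod_(i < n) f i) N%:Z = divz (\prod_(i < n) (f i - d i * K%:Z)) N%:Z
     %[mod (K %/ gcdn K L)%N%:Z])%Z.
Proof.
move=> K0 L0 N0 dA dB Hal.
set M := (K %/ gcdn K L)%N.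
set A := \prod_(i < n) f i.
set B := \prod_(i < n) (f i - d i * K%:Z).
have g0 : (0 < gcdn K L)%N by rewrite gcdn_gt0 K0.
have M0 : (0 < M)%N by rewrite divn_gt0 // dvdn_leq // dvdn_gcdl.
have KM : K = (M * gcdn K L)%N by rewrite divnK // dvdn_gcdl.
have dK : (K%:Z %| A - B)%Z.
  apply: prod_congr_dvd => i; rewrite opprB addrC subrK; exact: dvdz_mull.
have key : ((N * M)%N%:Z %| A - B)%Z.
  rewrite dvdzE /=; apply/dvdn_partP; first by rewrite muln_gt0 N0.
  move=> p; rewrite mem_primes => /and3P [pp _ _]; rewrite p_part.
  suff H : ((p ^ logn p (N * M))%N%:Z %| A - B)%Z by exact: H.
  rewrite lognM //.
  have [pM|npM] := boolP (p %| M)%N; last first.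
    have -> : logn p M = 0%N.
      by apply/eqP; rewrite -leqn0 leqNgt logn_gt0 mem_primes pp M0 npM.
    rewrite addn0. have h1 := natdvdz (pfactor_dvdnn p N). apply: (dvdz_trans h1).
    by rewrite rpredB.
  have lK : logn p K = (logn p M + minn (logn p K) (logn p L))%N.
    by rewrite -logn_gcd // {1}KM lognM.
  have mu0 : (0 < logn p M)%N by rewrite -(pfactor_dvdn 1) ?expn1.
  have lamK : (logn p L < logn p K)%N.
    rewrite ltnNge; apply/negP => le; move: lK; rewrite (minn_idPl le).
    move: mu0; lia.
  rewrite (minn_idPr (ltnW lamK)) in lK.
  have [lamN|Nlam] := ltnP (logn p L) (logn p N); last first.
    apply: dvdz_trans dK; apply: natdvdz.
    apply: dvdn_trans (pfactor_dvdnn p K); apply: dvdn_exp2l.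
    by rewrite lK addnC leq_add2l.
  have [al [alL alf alN]] := Hal p pp pM lamN.
  set g := fun i => (f i %/ (p ^ al i)%N%:Z)%Z.
  have pK : forall i, (p ^ al i %| K)%N.
    move=> i; apply: dvdn_trans (pfactor_dvdnn p K); apply: dvdn_exp2l.
    exact: leq_trans (alL i) (ltnW lamK).
  set h := fun i => g i - d i * (K %/ p ^ al i)%N%:Z.
  have fE : forall i, f i = g i * (p ^ al i)%N%:Z by move=> i; rewrite divzK.
  have fbE : forall i, f i - d i * K%:Z = h i * (p ^ al i)%N%:Z.
    move=> i; rewrite /h {1}fE -{1}(divnK (pK i)) PoszM; ring.
  have PE : \prod_(i < n) (p ^ al i)%N%:Z = (p ^ (\sum_(i < n) al i))%N%:Z.
    by rewrite expn_sum (big_morph Posz PoszM (erefl (1%:Z))).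
  have -> : A - B = (\prod_(i < n) g i - \prod_(i < n) h i) * (p ^ (\sum_(i < n) al i))%N%:Z.
    rewrite /A /B (eq_bigr _ (fun i _ => fE i)) (eq_bigr _ (fun i _ => fbE i)).
    by rewrite !big_split /= PE mulrBl.
  apply: dvdz_trans (natdvdz (dvdn_exp2l p (_ : (logn p N + logn p M <= logn p M + \sum_(i < n) al i)%N))) _.
    by rewrite addnC leq_add2l.
  rewrite expnD PoszM; apply: dvdz_mul => //.
  apply: prod_congr_dvd => i; rewrite /h opprB addrC subrK; apply: dvdz_mull.
  apply: natdvdz; have Kp0 : (0 < K %/ p ^ al i)%N.
    by rewrite divn_gt0 ?expn_gt0 ?prime_gt0 // dvdn_leq.
  rewrite pfactor_dvdn // logn_div // pfactorK // lK.
  by rewrite -addnBA ?leq_addr // (alL i).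
have [a Ea] := dvdzP dA.
have [b Eb] := dvdzP dB.
have Nn0 : N%:Z != 0 by rewrite eqz_nat -lt0n.
rewrite /A /B in key *; rewrite Ea Eb in key *.
rewrite !mulzK //; apply/eqP; rewrite eqz_mod_dvd.
by rewrite PoszM -mulrBl [X in (X %| _)%Z]mulrC dvdz_mul2r in key.
Qed.
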